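(* In the isotropic setting below, let $F\in\mathrm{GL}^+(3)$ be fixed and $t\mapsto C_p(t)\in\mathrm{PSym}(3)$ be differentiable with $$\frac{d}{dt}[C_p]=\lambda(t)\,\frac{\mathrm{dev}_3\widetilde\Sigma}{\varphi}\,C_p,\qquad \lambda(t)\ge0,\quad \varphi:=\sqrt{\mathrm{tr}[(\mathrm{dev}_3\widetilde\Sigma)^2]}>0,$$ where $\widetilde\Sigma$ and $\varphi$ are evaluated at $(C,C_p(t))$. Then $\frac{d}{dt}[C_p]$ is symmetric, $\det C_p(t)$ is constant in $t$, and $$\frac{d}{dt}\widetilde W\big(CC_p^{-1}(t)\big)=-\frac{\lambda(t)}{2}\,\varphi=-\frac{\lambda(t)}{2}\,\big\|\mathrm{dev}_3\big(U_p^{-1}\widetilde\Sigma\,U_p\big)\big\|\le0,\qquad U_p=\sqrt{C_p(t)}.$$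
   Context: $W$ objective and isotropic, written $W(F_e)=\Psi(I_1(C_e),I_2(C_e),I_3(C_e))$ with $\Psi\in C^1$; $\widetilde W(X)=\Psi(\mathrm{tr}X,\mathrm{tr}(\mathrm{Cof}X),\det X)$. $C=F^TF$. $\langle X,Y\rangle=\mathrm{tr}(XY^T)$, $\|\cdot\|$ Frobenius norm, $D$ gradient, $\mathrm{dev}_3X=X-\frac13\mathrm{tr}(X)\mathbb{1}$. $\widetilde\Sigma:=2\,C\,D\widetilde W(CC_p^{-1})\,C_p^{-1}$. *)

(* Defs.v *)
From Stdlib Require Import Reals.
Open Scope R_scope.

(* 3x3 real matrices, represented as functions of indices; only indices
   0,1,2 are meaningful. *)
Definition Mat := nat -> nat -> R.
Definition Vec := nat -> R.

Definition meq (A B : Mat) : Prop :=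
  forall i j, (i < 3)%nat -> (j < 3)%nat -> A i j = B i j.

Definition sum3 (f : nat -> R) : R := f 0%nat + f 1%nat + f 2%nat.

Definition idm : Mat := fun i j => if Nat.eqb i j then 1 else 0.
Definition madd (A B : Mat) : Mat := fun i j => A i j + B i j.
Definition msub (A B : Mat) : Mat := fun i j => A i j - B i j.
Definition mscal (s : R) (A : Mat) : Mat := fun i j => s * A i j.
Definition mmul (A B : Mat) : Mat := fun i j => sum3 (fun k => A i k * B k j).
Definition trn (A : Mat) : Mat := fun i j => A j i.
Definition Emat (i j : nat) : Mat :=
  fun k l => if andb (Nat.eqb k i) (Nat.eqb l j) then 1 else 0.

Definition mtr (A : Mat) : R := sum3 (fun i => A i i).

Definition det (A : Mat) : R :=
  A 0%nat 0%nat * (A 1%nat 1%nat * A 2%nat 2%nat - A 1%nat 2%nat * A 2%nat 1%nat)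
  - A 0%nat 1%nat * (A 1%nat 0%nat * A 2%nat 2%nat - A 1%nat 2%nat * A 2%nat 0%nat)
  + A 0%nat 2%nat * (A 1%nat 0%nat * A 2%nat 1%nat - A 1%nat 1%nat * A 2%nat 0%nat).

(* cofactor matrix: Cof(A)_ij = (-1)^(i+j) * minor_ij, written cyclically *)
Definition cof (A : Mat) : Mat := fun i j =>
  let i1 := Nat.modulo (i + 1) 3 in let i2 := Nat.modulo (i + 2) 3 in
  let j1 := Nat.modulo (j + 1) 3 in let j2 := Nat.modulo (j + 2) 3 in
  A i1 j1 * A i2 j2 - A i1 j2 * A i2 j1.

Definition minv (A : Mat) : Mat := mscal (/ det A) (trn (cof A)).

Definition dev3 (A : Mat) : Mat := msub A (mscal (mtr A / 3) idm).

Definition frob (A B : Mat) : R := mtr (mmul A (trn B)).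
Definition mnorm (A : Mat) : R := sqrt (frob A A).

Definition symmetric (A : Mat) : Prop :=
  forall i j, (i < 3)%nat -> (j < 3)%nat -> A i j = A j i.

Definition posdef (A : Mat) : Prop :=
  forall x : Vec, (x 0%nat <> 0 \/ x 1%nat <> 0 \/ x 2%nat <> 0) ->
    0 < sum3 (fun i => sum3 (fun j => x i * A i j * x j)).

Definition PSym (A : Mat) : Prop := symmetric A /\ posdef A.

Definition pos3 (a b c : R) : Prop := 0 < a /\ 0 < b /\ 0 < c.

Definition cont3_at (f : R -> R -> R -> R) (a b c : R) : Prop :=
  forall eps, 0 < eps -> exists del, 0 < del /\
    forall x y z, Rabs (x - a) < del -> Rabs (y - b) < del -> Rabs (z - c) < del ->
      Rabs (f x y z - f a b c) < eps.

Definition C1_pos (Psi : R -> R -> R -> R) : Prop :=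
  exists d1 d2 d3 : R -> R -> R -> R,
    forall a b c, pos3 a b c ->
      derivable_pt_lim (fun x => Psi x b c) a (d1 a b c) /\
      derivable_pt_lim (fun y => Psi a y c) b (d2 a b c) /\
      derivable_pt_lim (fun z => Psi a b z) c (d3 a b c) /\
      cont3_at d1 a b c /\ cont3_at d2 a b c /\ cont3_at d3 a b c.

Definition Wt (Psi : R -> R -> R -> R) (X : Mat) : R :=
  Psi (mtr X) (mtr (cof X)) (det X).

Definition is_gradW (Psi : R -> R -> R -> R) (G : Mat -> Mat) : Prop :=
  forall X, pos3 (mtr X) (mtr (cof X)) (det X) ->
    forall i j, (i < 3)%nat -> (j < 3)%nat ->
      derivable_pt_lim (fun s => Wt Psi (madd X (mscal s (Emat i j)))) 0 (G X i j).

Definition SigmaT (G : Mat -> Mat) (C Cp : Mat) : Mat :=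
  mscal 2 (mmul (mmul C (G (mmul C (minv Cp)))) (minv Cp)).

Definition phiT (G : Mat -> Mat) (C Cp : Mat) : R :=
  let D := dev3 (SigmaT G C Cp) in sqrt (mtr (mmul D D)).

Definition mderiv_at (M : R -> Mat) (t : R) (dM : Mat) : Prop :=
  forall i j, (i < 3)%nat -> (j < 3)%nat ->
    derivable_pt_lim (fun u => M u i j) t (dM i j).

(* Main.v *)
Require Import Defs.
From Stdlib Require Import Reals Lra Lia Psatz FunctionalExtensionality Classical.
Open Scope R_scope.

Lemma D_eq f t l l' : derivable_pt_lim f t l -> l = l' -> derivable_pt_lim f t l'.
Proof. intros H ->; exact H. Qed.
Lemma D_plus f g t a b : derivable_pt_lim f t a -> derivable_pt_lim g t b ->
  derivable_pt_lim (fun u => f u + g u) t (a + b).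
Proof. intros; apply derivable_pt_lim_plus; auto. Qed.
Lemma D_minus f g t a b : derivable_pt_lim f t a -> derivable_pt_lim g t b ->
  derivable_pt_lim (fun u => f u - g u) t (a - b).
Proof. intros; apply derivable_pt_lim_minus; auto. Qed.
Lemma D_mult f g t a b : derivable_pt_lim f t a -> derivable_pt_lim g t b ->
  derivable_pt_lim (fun u => f u * g u) t (a * g t + f t * b).
Proof. intros; apply derivable_pt_lim_mult; auto. Qed.
Lemma D_const (c : R) t : derivable_pt_lim (fun _ => c) t 0.
Proof. apply derivable_pt_lim_const. Qed.
Lemma D_ext f g t l : (forall u, f u = g u) -> derivable_pt_lim f t l -> derivable_pt_lim g t l.
Proof. intros E H. replace g with f; auto. apply functional_extensionality; auto. Qed.
Lemma D_inv f t a : derivable_pt_lim f t a -> f t <> 0 ->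
  derivable_pt_lim (fun u => / f u) t (- a / (f t * f t)).
Proof.
  intros H Hn. eapply D_eq.
  - apply (D_ext (fun u => 1 / f u)). { intro u; unfold Rdiv; ring. }
    apply (derivable_pt_lim_div (fun _ => 1) f t 0 a); auto. apply D_const.
  - unfold Rsqr; field; auto.
Qed.


Ltac dtac :=
  lazymatch goal with
  | |- derivable_pt_lim (fun _ => ?c) _ _ => apply D_const
  | |- derivable_pt_lim (fun u => @?A u + @?B u) _ _ => eapply (D_plus A B); [dtac | dtac]
  | |- derivable_pt_lim (fun u => @?A u - @?B u) _ _ => eapply (D_minus A B); [dtac | dtac]
  | |- derivable_pt_lim (fun u => @?A u * @?B u) _ _ => eapply (D_mult A B); [dtac | dtac]
  | |- derivable_pt_lim (fun u => / @?A u) _ _ => eapply (D_inv A); [dtac | ]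
  | |- _ => idtac
  end.

Ltac idx3 i := destruct i as [|[|[|i]]]; [| | | exfalso; lia].

Lemma test (M : R -> Mat) dM t : mderiv_at M t dM -> derivable_pt_lim (fun u => det (M u)) t (frob (cof (M t)) dM).
Proof.
  intro H. unfold det. eapply D_eq. dtac; try (apply H; lia).
  unfold frob, mtr, mmul, trn, cof, sum3. simpl. ring.
Qed.

Lemma mvt_gen f f' x0 x1 :
  (forall x, Rmin x0 x1 <= x <= Rmax x0 x1 -> derivable_pt_lim f x (f' x)) ->
  exists xi, Rabs (xi - x0) <= Rabs (x1 - x0) /\ f x1 - f x0 = f' xi * (x1 - x0).
Proof.
  intro H. destruct (Rtotal_order x0 x1) as [Hl|[He|Hg]].
  - destruct (MVT_cor2 f f' x0 x1 Hl) as [c [E Hc]].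
    { intros c Hc; apply H. rewrite Rmin_left, Rmax_right; lra. }
    exists c; split; auto. rewrite !Rabs_right; lra.
  - subst. exists x1. split. rewrite Rminus_diag, Rabs_R0; lra. ring.
  - destruct (MVT_cor2 f f' x1 x0 Hg) as [c [E Hc]].
    { intros c Hc; apply H. rewrite Rmin_right, Rmax_left; lra. }
    exists c; split. rewrite (Rabs_left (c - x0)), (Rabs_left (x1-x0)); lra. lra.
Qed.

Lemma prod_close A B A0 B0 e : Rabs (A - A0) < e -> Rabs (B - B0) < e -> e <= 1 ->
  Rabs (A * B - A0 * B0) <= e * (Rabs A0 + Rabs B0 + 1).
Proof.
  intros H1 H2 H3.
  replace (A * B - A0 * B0) with ((A - A0) * (B - B0) + (A - A0) * B0 + A0 * (B - B0)) by ring.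
  eapply Rle_trans. apply Rabs_triang. eapply Rle_trans. apply Rplus_le_compat_r. apply Rabs_triang.
  rewrite !Rabs_mult.
  assert (0 <= Rabs (A-A0)) by apply Rabs_pos.
  assert (0 <= Rabs (B-B0)) by apply Rabs_pos.
  assert (0 <= Rabs A0) by apply Rabs_pos.
  assert (0 <= Rabs B0) by apply Rabs_pos.
  nra.
Qed.

Lemma deriv_incr g t v : derivable_pt_lim g t v ->
  exists d : posreal, forall h, Rabs h < d -> Rabs (g (t + h) - g t) <= (Rabs v + 1) * Rabs h.
Proof.
  intro H. destruct (H 1 Rlt_0_1) as [d Hd]. exists d. intros h Hh.
  destruct (Req_dec h 0) as [->|Hn].
  { rewrite Rplus_0_r, Rminus_diag, !Rabs_R0; lra. }
  specialize (Hd h Hn Hh).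
  replace (g (t + h) - g t) with (((g (t + h) - g t) / h - v) * h + v * h) by (field; auto).
  eapply Rle_trans. apply Rabs_triang. rewrite !Rabs_mult.
  assert (0 <= Rabs h) by apply Rabs_pos. nra.
Qed.

Definition C1data (Psi : R -> R -> R -> R) (d1 d2 d3 : R -> R -> R -> R) :=
  forall a b c, pos3 a b c ->
      derivable_pt_lim (fun x => Psi x b c) a (d1 a b c) /\
      derivable_pt_lim (fun y => Psi a y c) b (d2 a b c) /\
      derivable_pt_lim (fun z => Psi a b z) c (d3 a b c) /\
      cont3_at d1 a b c /\ cont3_at d2 a b c /\ cont3_at d3 a b c.

Lemma chain3 Psi d1 d2 d3 (g1 g2 g3 : R -> R) t v1 v2 v3 :
  C1data Psi d1 d2 d3 -> pos3 (g1 t) (g2 t) (g3 t) ->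
  derivable_pt_lim g1 t v1 -> derivable_pt_lim g2 t v2 -> derivable_pt_lim g3 t v3 ->
  derivable_pt_lim (fun u => Psi (g1 u) (g2 u) (g3 u)) t
    (d1 (g1 t) (g2 t) (g3 t) * v1 + d2 (g1 t) (g2 t) (g3 t) * v2 + d3 (g1 t) (g2 t) (g3 t) * v3).
Proof.
  intros HC Hp H1 H2 H3.
  set (a := g1 t) in *. set (b := g2 t) in *. set (c := g3 t) in *.
  destruct (HC a b c Hp) as [_ [_ [_ [C1 [C2 C3]]]]].
  destruct Hp as [Ha [Hb Hc]].
  intros eps Heps.
  set (K := Rabs (d1 a b c) + Rabs v1 + 1 + (Rabs (d2 a b c) + Rabs v2 + 1) + (Rabs (d3 a b c) + Rabs v3 + 1)).
  assert (HK : 1 <= K) by (unfold K; pose proof (Rabs_pos (d1 a b c)); pose proof (Rabs_pos v1);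
     pose proof (Rabs_pos (d2 a b c)); pose proof (Rabs_pos v2);
     pose proof (Rabs_pos (d3 a b c)); pose proof (Rabs_pos v3); lra).
  set (e := Rmin 1 (eps / (4 * K))).
  assert (He : 0 < e). { unfold e. apply Rmin_glb_lt. lra. apply Rdiv_lt_0_compat; lra. }
  assert (He1 : e <= 1) by apply Rmin_l.
  assert (HeK : e * K <= eps / 4).
  { assert (e <= eps / (4 * K)) by apply Rmin_r.
    apply Rmult_le_compat_r with (r := K) in H; [|lra].
    replace (eps / (4 * K) * K) with (eps / 4) in H by (field; lra). lra. }
  destruct (C1 e He) as [r1 [Hr1 Cr1]].
  destruct (C2 e He) as [r2 [Hr2 Cr2]].
  destruct (C3 e He) as [r3 [Hr3 Cr3]].
  set (rho := Rmin (Rmin r1 r2) (Rmin r3 (Rmin a (Rmin b c)))).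
  assert (Hrho : 0 < rho).
  { unfold rho. repeat apply Rmin_glb_lt; lra. }
  assert (Hrho1 : rho <= r1 /\ rho <= r2 /\ rho <= r3 /\ rho <= a /\ rho <= b /\ rho <= c).
  { unfold rho. pose proof (Rmin_l r1 r2). pose proof (Rmin_r r1 r2). pose proof (Rmin_l (Rmin r1 r2) (Rmin r3 (Rmin a (Rmin b c)))).
    pose proof (Rmin_r (Rmin r1 r2) (Rmin r3 (Rmin a (Rmin b c)))). pose proof (Rmin_l r3 (Rmin a (Rmin b c))).
    pose proof (Rmin_r r3 (Rmin a (Rmin b c))). pose proof (Rmin_l a (Rmin b c)). pose proof (Rmin_r a (Rmin b c)).
    pose proof (Rmin_l b c). pose proof (Rmin_r b c). repeat split; lra. }
  destruct Hrho1 as [R1 [R2 [R3 [Ra [Rb Rc]]]]].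
  destruct (H1 e He) as [q1 Q1]. destruct (H2 e He) as [q2 Q2]. destruct (H3 e He) as [q3 Q3].
  destruct (deriv_incr g1 t v1 H1) as [p1 P1].
  destruct (deriv_incr g2 t v2 H2) as [p2 P2].
  destruct (deriv_incr g3 t v3 H3) as [p3 P3].
  set (V := Rabs v1 + Rabs v2 + Rabs v3 + 1).
  assert (HV : 1 <= V) by (unfold V; pose proof (Rabs_pos v1); pose proof (Rabs_pos v2); pose proof (Rabs_pos v3); lra).
  assert (Hd : 0 < Rmin (Rmin (Rmin q1 q2) (Rmin q3 p1)) (Rmin (Rmin p2 p3) (rho / V))).
  { destruct q1, q2, q3, p1, p2, p3; simpl. repeat apply Rmin_glb_lt; try lra.
    apply Rdiv_lt_0_compat; lra. }
  exists (mkposreal _ Hd). intros h Hh0 Hh. simpl in Hh.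
  assert (Hq1 : Rabs h < q1). { eapply Rlt_le_trans; [exact Hh|]. eapply Rle_trans; [apply Rmin_l|]. eapply Rle_trans; [apply Rmin_l|]. apply Rmin_l. }
  assert (Hq2 : Rabs h < q2). { eapply Rlt_le_trans; [exact Hh|]. eapply Rle_trans; [apply Rmin_l|]. eapply Rle_trans; [apply Rmin_l|]. apply Rmin_r. }
  assert (Hq3 : Rabs h < q3). { eapply Rlt_le_trans; [exact Hh|]. eapply Rle_trans; [apply Rmin_l|]. eapply Rle_trans; [apply Rmin_r|]. apply Rmin_l. }
  assert (Hp1 : Rabs h < p1). { eapply Rlt_le_trans; [exact Hh|]. eapply Rle_trans; [apply Rmin_l|]. eapply Rle_trans; [apply Rmin_r|]. apply Rmin_r. }
  assert (Hp2 : Rabs h < p2). { eapply Rlt_le_trans; [exact Hh|]. eapply Rle_trans; [apply Rmin_r|]. eapply Rle_trans; [apply Rmin_l|]. apply Rmin_l. }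
  assert (Hp3 : Rabs h < p3). { eapply Rlt_le_trans; [exact Hh|]. eapply Rle_trans; [apply Rmin_r|]. eapply Rle_trans; [apply Rmin_l|]. apply Rmin_r. }
  assert (HhV : Rabs h < rho / V). { eapply Rlt_le_trans; [exact Hh|]. eapply Rle_trans; [apply Rmin_r|]. apply Rmin_r. }
  assert (HhV' : V * Rabs h < rho).
  { apply Rmult_lt_compat_l with (r := V) in HhV; [|lra].
    replace (V * (rho / V)) with rho in HhV by (field; lra). exact HhV. }
  assert (Hah : 0 < Rabs h) by (apply Rabs_pos_lt; auto).
  set (x := g1 (t + h)). set (y := g2 (t + h)). set (z := g3 (t + h)).
  assert (Dx : Rabs (x - a) < rho).
  { specialize (P1 h Hp1). fold x a in P1. assert (Rabs v1 + 1 <= V) by (unfold V; pose proof (Rabs_pos v2); pose proof (Rabs_pos v3); lra). nra. }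
  assert (Dy : Rabs (y - b) < rho).
  { specialize (P2 h Hp2). fold y b in P2. assert (Rabs v2 + 1 <= V) by (unfold V; pose proof (Rabs_pos v1); pose proof (Rabs_pos v3); lra). nra. }
  assert (Dz : Rabs (z - c) < rho).
  { specialize (P3 h Hp3). fold z c in P3. assert (Rabs v3 + 1 <= V) by (unfold V; pose proof (Rabs_pos v2); pose proof (Rabs_pos v1); lra). nra. }
  assert (Pos : forall p q s, Rabs (p - a) < rho -> Rabs (q - b) < rho -> Rabs (s - c) < rho -> pos3 p q s).
  { intros p q s E1 E2 E3. apply Rabs_def2 in E1. apply Rabs_def2 in E2. apply Rabs_def2 in E3.
    repeat split; lra. }
  destruct (mvt_gen (fun s => Psi s y z) (fun s => d1 s y z) a x) as [xi [Xi EX]].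
  { intros s Hs. apply (HC s y z). apply Pos; auto.
    apply Rle_lt_trans with (Rabs (x - a)); auto.
    destruct (Rle_dec a x).
    - rewrite Rmin_left, Rmax_right in Hs by lra. rewrite !Rabs_right; lra.
    - rewrite Rmin_right, Rmax_left in Hs by lra.
      rewrite (Rabs_left1 (x - a)) by lra. unfold Rabs; destruct (Rcase_abs (s - a)); lra. }
  destruct (mvt_gen (fun s => Psi a s z) (fun s => d2 a s z) b y) as [eta [Eta EY]].
  { intros s Hs. apply (HC a s z). apply Pos; auto.
    rewrite Rminus_diag, Rabs_R0; lra.
    apply Rle_lt_trans with (Rabs (y - b)); auto.
    destruct (Rle_dec b y).
    - rewrite Rmin_left, Rmax_right in Hs by lra. rewrite !Rabs_right; lra.
    - rewrite Rmin_right, Rmax_left in Hs by lra.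
      rewrite (Rabs_left1 (y - b)) by lra. unfold Rabs; destruct (Rcase_abs (s - b)); lra. }
  destruct (mvt_gen (fun s => Psi a b s) (fun s => d3 a b s) c z) as [zeta [Zeta EZ]].
  { intros s Hs. apply (HC a b s). apply Pos; auto.
    rewrite Rminus_diag, Rabs_R0; lra. rewrite Rminus_diag, Rabs_R0; lra.
    apply Rle_lt_trans with (Rabs (z - c)); auto.
    destruct (Rle_dec c z).
    - rewrite Rmin_left, Rmax_right in Hs by lra. rewrite !Rabs_right; lra.
    - rewrite Rmin_right, Rmax_left in Hs by lra.
      rewrite (Rabs_left1 (z - c)) by lra. unfold Rabs; destruct (Rcase_abs (s - c)); lra. }
  simpl in EX, EY, EZ.
  assert (E1 : Rabs (d1 xi y z - d1 a b c) < e) by (apply Cr1; lra).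
  assert (E2 : Rabs (d2 a eta z - d2 a b c) < e).
  { apply Cr2; try lra. rewrite Rminus_diag, Rabs_R0; lra. }
  assert (E3 : Rabs (d3 a b zeta - d3 a b c) < e).
  { apply Cr3; try lra; rewrite Rminus_diag, Rabs_R0; lra. }
  specialize (Q1 h Hh0 Hq1). specialize (Q2 h Hh0 Hq2). specialize (Q3 h Hh0 Hq3).
  fold x a in Q1. fold y b in Q2. fold z c in Q3.
  pose proof (prod_close _ _ _ _ _ E1 Q1 He1) as T1.
  pose proof (prod_close _ _ _ _ _ E2 Q2 He1) as T2.
  pose proof (prod_close _ _ _ _ _ E3 Q3 He1) as T3.
  change (g1 t) with a. change (g2 t) with b. change (g3 t) with c.
  replace ((Psi x y z - Psi a b c) / h - (d1 a b c * v1 + d2 a b c * v2 + d3 a b c * v3))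
    with ((d1 xi y z * ((x - a) / h) - d1 a b c * v1) + (d2 a eta z * ((y - b) / h) - d2 a b c * v2)
          + (d3 a b zeta * ((z - c) / h) - d3 a b c * v3)).
  2:{ replace (Psi x y z - Psi a b c) with ((Psi x y z - Psi a y z) + (Psi a y z - Psi a b z) + (Psi a b z - Psi a b c)) by ring.
      rewrite EX, EY, EZ. field. auto. }
  eapply Rle_lt_trans. apply Rabs_triang. eapply Rle_lt_trans. apply Rplus_le_compat_r. apply Rabs_triang.
  unfold K in HeK. nra.
Qed.

Ltac ent := intros i j Hi Hj; idx3 i; idx3 j.

Lemma dtr (M : R -> Mat) dM t : mderiv_at M t dM ->
  derivable_pt_lim (fun u => mtr (M u)) t (frob idm dM).
Proof. intro H. unfold mtr, sum3. eapply D_eq. dtac; try (apply H; lia).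
  unfold frob, mtr, mmul, trn, idm, sum3. simpl. ring. Qed.

Lemma ddet (M : R -> Mat) dM t : mderiv_at M t dM ->
  derivable_pt_lim (fun u => det (M u)) t (frob (cof (M t)) dM).
Proof. intro H. unfold det. eapply D_eq. dtac; try (apply H; lia).
  unfold frob, mtr, mmul, trn, cof, sum3. simpl. ring. Qed.

Lemma dtc (M : R -> Mat) dM t : mderiv_at M t dM ->
  derivable_pt_lim (fun u => mtr (cof (M u))) t (frob (msub (mscal (mtr (M t)) idm) (trn (M t))) dM).
Proof. intro H. unfold mtr, cof, sum3. simpl. eapply D_eq. dtac; try (apply H; lia).
  unfold frob, mtr, mmul, trn, msub, mscal, idm, sum3. simpl. ring. Qed.

Lemma dmulc (M : R -> Mat) dM A t : mderiv_at M t dM ->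
  mderiv_at (fun u => mmul A (M u)) t (mmul A dM).
Proof. intro H. ent; unfold mmul, sum3; eapply D_eq; (dtac; try (apply H; lia)); simpl; ring. Qed.

Lemma dline X E t : mderiv_at (fun s => madd X (mscal s E)) t E.
Proof. intros i j _ _. unfold madd, mscal. eapply D_eq.
  apply D_plus. apply D_const. apply D_mult. apply derivable_pt_lim_id. apply D_const.
  unfold id; ring. Qed.

Ltac mx := cbv [minv mscal mmul trn frob mtr sum3 det cof madd msub idm dev3 Emat] in *; simpl in *.

Lemma dminv (M : R -> Mat) dM t : mderiv_at M t dM -> det (M t) <> 0 ->
  mderiv_at (fun u => minv (M u)) t (mscal (-1) (mmul (mmul (minv (M t)) dM) (minv (M t)))).
Proof. intros H Hd. pose proof (ddet M dM t H) as Hdd.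
  ent; unfold minv at 1; unfold mscal at 1, trn at 1;
  (eapply D_eq; [eapply D_mult; [eapply D_inv; [exact Hdd | exact Hd] | unfold cof; simpl; dtac; try (apply H; lia)] |]);
  clear Hdd; mx; field; exact Hd.
Qed.

Lemma meq_refl A : meq A A. Proof. intros i j _ _; reflexivity. Qed.
Lemma meq_sym A B : meq A B -> meq B A. Proof. intros H i j Hi Hj; symmetry; auto. Qed.
Lemma meq_trans A B C : meq A B -> meq B C -> meq A C.
Proof. intros H1 H2 i j Hi Hj; rewrite H1; auto. Qed.

Ltac s3 H := cbv [sum3]; rewrite ?(H 0%nat 0%nat), ?(H 0%nat 1%nat), ?(H 0%nat 2%nat),
  ?(H 1%nat 0%nat), ?(H 1%nat 1%nat), ?(H 1%nat 2%nat),
  ?(H 2%nat 0%nat), ?(H 2%nat 1%nat), ?(H 2%nat 2%nat) by lia.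

Lemma mmul_meq A A' B B' : meq A A' -> meq B B' -> meq (mmul A B) (mmul A' B').
Proof. intros H1 H2 i j Hi Hj. unfold mmul, sum3.
  rewrite !H1 by lia. rewrite !H2 by lia. reflexivity. Qed.
Lemma madd_meq A A' B B' : meq A A' -> meq B B' -> meq (madd A B) (madd A' B').
Proof. intros H1 H2 i j Hi Hj. unfold madd. rewrite H1, H2 by lia. reflexivity. Qed.
Lemma msub_meq A A' B B' : meq A A' -> meq B B' -> meq (msub A B) (msub A' B').
Proof. intros H1 H2 i j Hi Hj. unfold msub. rewrite H1, H2 by lia. reflexivity. Qed.
Lemma mscal_meq s A A' : meq A A' -> meq (mscal s A) (mscal s A').
Proof. intros H1 i j Hi Hj. unfold mscal. rewrite H1 by lia. reflexivity. Qed.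
Lemma trn_meq A A' : meq A A' -> meq (trn A) (trn A').
Proof. intros H1 i j Hi Hj. unfold trn. rewrite H1 by lia. reflexivity. Qed.
Lemma mtr_meq A A' : meq A A' -> mtr A = mtr A'.
Proof. intros H. unfold mtr, sum3. rewrite !H by lia. reflexivity. Qed.
Lemma det_meq A A' : meq A A' -> det A = det A'.
Proof. intros H. unfold det. rewrite !H by lia. reflexivity. Qed.
Lemma cof_meq A A' : meq A A' -> meq (cof A) (cof A').
Proof. intros H; ent; unfold cof; simpl; rewrite !H by lia; reflexivity. Qed.
Lemma dev3_meq A A' : meq A A' -> meq (dev3 A) (dev3 A').
Proof. intros H. unfold dev3. rewrite (mtr_meq _ _ H). apply msub_meq; auto. apply meq_refl. Qed.
Lemma frob_meq A A' B B' : meq A A' -> meq B B' -> frob A B = frob A' B'.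
Proof. intros H1 H2. unfold frob. apply mtr_meq. apply mmul_meq; auto. apply trn_meq; auto. Qed.
Lemma minv_meq A A' : meq A A' -> meq (minv A) (minv A').
Proof. intros H. unfold minv. rewrite (det_meq _ _ H). apply mscal_meq, trn_meq, cof_meq; auto. Qed.
Lemma sym_meq A B : meq A B -> symmetric B -> symmetric A.
Proof. intros H S i j Hi Hj. rewrite !H by lia. auto. Qed.

Lemma mmul_assoc A B C : mmul (mmul A B) C = mmul A (mmul B C).
Proof. apply functional_extensionality; intro i; apply functional_extensionality; intro j.
  unfold mmul, sum3. ring. Qed.
Lemma mmul_idm_r A : meq (mmul A idm) A.
Proof. ent; unfold mmul, idm, sum3; simpl; ring. Qed.
Lemma mmul_idm_l A : meq (mmul idm A) A.
Proof. ent; unfold mmul, idm, sum3; simpl; ring. Qed.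
Lemma minv_r P : det P <> 0 -> meq (mmul P (minv P)) idm.
Proof. intro H; ent; mx; field; auto. Qed.
Lemma minv_l P : det P <> 0 -> meq (mmul (minv P) P) idm.
Proof. intro H; ent; mx; field; auto. Qed.
Lemma minv_sym P : symmetric P -> symmetric (minv P).
Proof. intros S; ent; try reflexivity; mx; s3 S; try ring. Qed.

Definition qf (A : Mat) (x : Vec) := sum3 (fun i => sum3 (fun j => x i * A i j * x j)).
Definition v3 (a b c : R) : Vec := fun n => match n with 0%nat => a | 1%nat => b | _ => c end.

Lemma nz_dec (x : Vec) : (x 0%nat <> 0 \/ x 1%nat <> 0 \/ x 2%nat <> 0) \/ (x 0%nat = 0 /\ x 1%nat = 0 /\ x 2%nat = 0).
Proof. destruct (Req_dec (x 0%nat) 0); destruct (Req_dec (x 1%nat) 0); destruct (Req_dec (x 2%nat) 0); tauto. Qed.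

Lemma qf_nonneg A x : posdef A -> 0 <= qf A x.
Proof. intro H. destruct (nz_dec x) as [N|[E0 [E1 E2]]].
  - left. apply H. auto.
  - right. unfold qf, sum3. rewrite E0, E1, E2. ring. Qed.

Lemma pd_det P : PSym P -> 0 < det P.
Proof.
  intros [S H].
  assert (H0 : 0 < P 0%nat 0%nat).
  { assert (Kp : 0 < qf P (v3 1 0 0)) by (apply H; simpl; lra).
    cbv [qf sum3 v3] in Kp. simpl in Kp. lra. }
  set (m := P 0%nat 0%nat * P 1%nat 1%nat - P 0%nat 1%nat * P 1%nat 0%nat).
  assert (Hm : 0 < m).
  { assert (Kp : 0 < qf P (v3 (P 0%nat 1%nat) (- P 0%nat 0%nat) 0)) by (apply H; simpl; lra).
    assert (E : qf P (v3 (P 0%nat 1%nat) (- P 0%nat 0%nat) 0) = P 0%nat 0%nat * m).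
    { unfold m; cbv [qf sum3 v3]; simpl. rewrite (S 1%nat 0%nat) by lia. ring. }
    rewrite E in Kp. nra. }
  pose proof (H (v3 (cof P 2%nat 0%nat) (cof P 2%nat 1%nat) (cof P 2%nat 2%nat))) as K.
  assert (E2 : cof P 2%nat 2%nat = m) by (unfold m, cof; simpl; ring).
  assert (Kp : 0 < qf P (v3 (cof P 2%nat 0%nat) (cof P 2%nat 1%nat) (cof P 2%nat 2%nat))).
  { apply K. right; right. simpl. lra. }
  assert (E : qf P (v3 (cof P 2%nat 0%nat) (cof P 2%nat 1%nat) (cof P 2%nat 2%nat)) = det P * m).
  { unfold m; cbv [qf sum3 v3 cof det]; simpl; ring. }
  rewrite E in Kp. nra.
Qed.

Lemma pd_minv P : PSym P -> posdef (minv P).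
Proof.
  intros HP. pose proof (pd_det P HP) as Hd. destruct HP as [S H].
  intros x Hx. pose proof Hd as Hd'. unfold det in Hd'.
  set (y := fun i => sum3 (fun j => minv P i j * x j)).
  assert (Ey : qf (minv P) x = qf P y).
  { unfold y, qf. cbv [sum3 minv mscal trn cof det]. simpl. field. lra. }
  assert (Ex : forall i, (i < 3)%nat -> x i = sum3 (fun j => P i j * y j)).
  { intros i Hi; idx3 i; unfold y; cbv [sum3 minv mscal trn cof det]; simpl; field; lra. }
  unfold qf in Ey. rewrite Ey. apply H.
  destruct (nz_dec y) as [N|[E0 [E1 E2]]]; auto.
  exfalso. rewrite (Ex 0%nat), (Ex 1%nat), (Ex 2%nat) in Hx by lia. cbv [sum3] in Hx.
  rewrite E0, E1, E2 in Hx. lra.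
Qed.

Lemma trPD F Q : det F <> 0 -> posdef Q -> 0 < mtr (mmul (mmul (trn F) F) Q).
Proof.
  intros HF HQ.
  assert (E : mtr (mmul (mmul (trn F) F) Q) = qf Q (fun j => F 0%nat j) + qf Q (fun j => F 1%nat j) + qf Q (fun j => F 2%nat j)).
  { cbv [mtr mmul trn qf sum3]. ring. }
  rewrite E.
  pose proof (qf_nonneg Q (fun j => F 0%nat j) HQ).
  pose proof (qf_nonneg Q (fun j => F 1%nat j) HQ).
  pose proof (qf_nonneg Q (fun j => F 2%nat j) HQ).
  destruct (nz_dec (fun j => F 0%nat j)) as [N0|Z0].
  { assert (0 < qf Q (fun j => F 0%nat j)) by (apply HQ; exact N0). lra. }
  destruct (nz_dec (fun j => F 1%nat j)) as [N1|Z1].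
  { assert (0 < qf Q (fun j => F 1%nat j)) by (apply HQ; exact N1). lra. }
  destruct (nz_dec (fun j => F 2%nat j)) as [N2|Z2].
  { assert (0 < qf Q (fun j => F 2%nat j)) by (apply HQ; exact N2). lra. }
  exfalso. apply HF. simpl in Z0, Z1, Z2. unfold det.
  destruct Z0 as [-> [-> ->]]. ring.
Qed.

Lemma det_mul A B : det (mmul A B) = det A * det B.
Proof. cbv [det mmul sum3]. ring. Qed.
Lemma det_trn A : det (trn A) = det A.
Proof. cbv [det trn]. ring. Qed.
Lemma det_minv P : det P <> 0 -> det (minv P) = / det P.
Proof. intro H. cbv [det minv mscal trn cof] in *. simpl. field. auto. Qed.
Lemma det_cof A : det (cof A) = det A * det A.
Proof. cbv [det cof]. simpl. ring. Qed.
Lemma cof_mul A B : meq (cof (mmul A B)) (mmul (cof A) (cof B)).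
Proof. ent; cbv [cof mmul sum3]; simpl; ring. Qed.
Lemma cof_trn A : meq (cof (trn A)) (trn (cof A)).
Proof. ent; cbv [cof trn]; simpl; ring. Qed.
Lemma cof_minv P : det P <> 0 -> meq (cof (minv P)) (mscal (/ det P) (trn P)).
Proof. intro H; ent; cbv [cof minv mscal trn det] in *; simpl; field; auto. Qed.
Lemma mtr_scal_r A s B : mtr (mmul A (mscal s B)) = s * mtr (mmul A B).
Proof. cbv [mtr mmul mscal sum3]. ring. Qed.
Lemma sym_trn P : symmetric P -> meq (trn P) P.
Proof. intros S i j Hi Hj. unfold trn. symmetry. auto. Qed.

Lemma posX F P : 0 < det F -> PSym P ->
  pos3 (mtr (mmul (mmul (trn F) F) (minv P))) (mtr (cof (mmul (mmul (trn F) F) (minv P))))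
       (det (mmul (mmul (trn F) F) (minv P))).
Proof.
  intros HF HP. pose proof (pd_det P HP) as Hd. pose proof HP as [S Hpd].
  split; [|split].
  - apply trPD. lra. apply pd_minv; auto.
  - rewrite (mtr_meq _ _ (cof_mul _ _)).
    rewrite (mtr_meq _ (mmul (mmul (trn (cof F)) (cof F)) (mscal (/ det P) P))).
    + rewrite mtr_scal_r. apply Rmult_lt_0_compat. apply Rinv_0_lt_compat; auto.
      apply trPD. rewrite det_cof. nra. auto.
    + apply mmul_meq.
      * eapply meq_trans. apply cof_mul. apply mmul_meq. apply cof_trn. apply meq_refl.
      * eapply meq_trans. apply cof_minv. lra. apply mscal_meq. apply sym_trn; auto.
  - rewrite !det_mul, det_trn, det_minv by lra.
    apply Rmult_lt_0_compat. nra. apply Rinv_0_lt_compat; auto.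
Qed.

Definition Gf (d1 d2 d3 : R -> R -> R -> R) (X : Mat) : Mat :=
  madd (madd (mscal (d1 (mtr X) (mtr (cof X)) (det X)) idm)
             (mscal (d2 (mtr X) (mtr (cof X)) (det X)) (msub (mscal (mtr X) idm) (trn X))))
       (mscal (d3 (mtr X) (mtr (cof X)) (det X)) (cof X)).

Lemma frob_E K i j : (i < 3)%nat -> (j < 3)%nat -> frob K (Emat i j) = K i j.
Proof. intros Hi Hj. idx3 i; idx3 j; cbv [frob mtr mmul trn Emat sum3]; simpl; ring. Qed.

Lemma M0 X E : meq (madd X (mscal 0 E)) X.
Proof. intros i j _ _. unfold madd, mscal. ring. Qed.

Lemma G_formula Psi d1 d2 d3 G X : C1data Psi d1 d2 d3 -> is_gradW Psi G ->
  pos3 (mtr X) (mtr (cof X)) (det X) -> meq (G X) (Gf d1 d2 d3 X).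
Proof.
  intros HC HG Hp i j Hi Hj.
  set (M := fun s => madd X (mscal s (Emat i j))).
  assert (E0 : meq (M 0) X) by apply M0.
  assert (Hp' : pos3 (mtr (M 0)) (mtr (cof (M 0))) (det (M 0))).
  { rewrite (mtr_meq _ _ E0), (mtr_meq _ _ (cof_meq _ _ E0)), (det_meq _ _ E0). auto. }
  pose proof (chain3 Psi d1 d2 d3 (fun s => mtr (M s)) (fun s => mtr (cof (M s))) (fun s => det (M s)) 0
    _ _ _ HC Hp' (dtr M _ 0 (dline X (Emat i j) 0)) (dtc M _ 0 (dline X (Emat i j) 0))
                (ddet M _ 0 (dline X (Emat i j) 0))) as Hch.
  simpl in Hch. rewrite (mtr_meq _ _ E0), (mtr_meq _ _ (cof_meq _ _ E0)), (det_meq _ _ E0) in Hch.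
  pose proof (HG X Hp i j Hi Hj) as HGij.
  rewrite (uniqueness_limite _ _ _ _ HGij Hch).
  rewrite (frob_meq _ _ _ _ (cof_meq _ _ E0) (meq_refl _)).
  rewrite (frob_meq (msub (mscal (mtr X) idm) (trn (M 0))) (msub (mscal (mtr X) idm) (trn X)) (Emat i j) (Emat i j)).
  2:{ apply msub_meq. apply meq_refl. apply trn_meq; auto. }
  2:{ apply meq_refl. }
  rewrite !frob_E by auto. unfold Gf, madd, mscal, idm. ring.
Qed.

Lemma sym_CG0 (Cm Q : Mat) e1 e2 e3 : symmetric Cm -> symmetric Q ->
  symmetric (mmul Cm (madd (madd (mscal e1 idm) (mscal e2 (msub (mscal (mtr (mmul Cm Q)) idm) (trn (mmul Cm Q)))))
     (mscal e3 (cof (mmul Cm Q))))).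
Proof.
  intros SC SQ.
  assert (c10 := SC 1%nat 0%nat ltac:(lia) ltac:(lia)).
  assert (c20 := SC 2%nat 0%nat ltac:(lia) ltac:(lia)).
  assert (c21 := SC 2%nat 1%nat ltac:(lia) ltac:(lia)).
  assert (q10 := SQ 1%nat 0%nat ltac:(lia) ltac:(lia)).
  assert (q20 := SQ 2%nat 0%nat ltac:(lia) ltac:(lia)).
  assert (q21 := SQ 2%nat 1%nat ltac:(lia) ltac:(lia)).
  ent; try reflexivity; cbv [mmul madd mscal msub idm trn mtr cof sum3]; simpl;
  rewrite ?c10, ?c20, ?c21, ?q10, ?q20, ?q21; ring.
Qed.

Lemma sym_CG Psi d1 d2 d3 G (Cm P : Mat) : C1data Psi d1 d2 d3 -> is_gradW Psi G ->
  symmetric Cm -> symmetric P -> pos3 (mtr (mmul Cm (minv P))) (mtr (cof (mmul Cm (minv P)))) (det (mmul Cm (minv P))) ->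
  symmetric (mmul Cm (G (mmul Cm (minv P)))).
Proof.
  intros HC HG SC SP Hp.
  eapply sym_meq. apply mmul_meq. apply meq_refl. apply (G_formula Psi d1 d2 d3); auto.
  unfold Gf. apply sym_CG0; auto. apply minv_sym; auto.
Qed.

Ltac fext := apply functional_extensionality; intro; apply functional_extensionality; intro.

Lemma SP_eq Y P : det P <> 0 -> meq (mmul (mscal 2 (mmul Y (minv P))) P) (mscal 2 Y).
Proof. intro H.
  replace (mmul (mscal 2 (mmul Y (minv P))) P) with (mscal 2 (mmul Y (mmul (minv P) P)))
    by (fext; cbv [mmul mscal sum3]; ring).
  apply mscal_meq. eapply meq_trans. apply mmul_meq. apply meq_refl. apply minv_l; auto.
  apply mmul_idm_r. Qed.

Lemma devP S P : meq (mmul (dev3 S) P) (msub (mmul S P) (mscal (mtr S / 3) P)).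
Proof. ent; cbv [mmul dev3 msub mscal idm sum3]; simpl; ring. Qed.

Lemma sym_sub_scal Y P c : symmetric Y -> symmetric P -> symmetric (msub (mscal 2 Y) (mscal c P)).
Proof. intros S1 S2 i j Hi Hj. unfold msub, mscal. rewrite S1, S2 by auto. reflexivity. Qed.
Lemma sym_scal c Y : symmetric Y -> symmetric (mscal c Y).
Proof. intros S1 i j Hi Hj. unfold mscal. rewrite S1 by auto. reflexivity. Qed.

Lemma frob_cof_MP M P : frob (cof P) (mmul M P) = det P * mtr M.
Proof. cbv [frob cof mmul mtr trn det sum3]; simpl; ring. Qed.
Lemma mtr_dev S : mtr (dev3 S) = 0.
Proof. cbv [mtr dev3 msub mscal idm sum3]; simpl; field. Qed.
Lemma frob_scal A k B : frob A (mscal k B) = k * frob A B.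
Proof. cbv [frob mtr mmul trn mscal sum3]; ring. Qed.

Lemma sym_inst (S : Mat) : symmetric S -> S 1%nat 0%nat = S 0%nat 1%nat /\ S 2%nat 0%nat = S 0%nat 2%nat /\ S 2%nat 1%nat = S 1%nat 2%nat.
Proof. intro H. repeat split; apply H; lia. Qed.

Lemma frob_sym S M : symmetric S -> frob S M = mtr (mmul S M).
Proof. intro H. destruct (sym_inst S H) as [e1 [e2 e3]].
  cbv [frob mtr mmul trn sum3]. rewrite e1, e2, e3. ring. Qed.

Lemma frob_move G Cm Q D : frob G (mmul (mmul Cm Q) D) = frob (mmul (trn Cm) G) (mmul Q D).
Proof. cbv [frob mtr mmul trn sum3]. ring. Qed.

Lemma mtr_sig_dev S : mtr (mmul S (dev3 S)) = mtr (mmul (dev3 S) (dev3 S)).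
Proof. cbv [mtr mmul dev3 msub mscal idm sum3]; simpl; field. Qed.

Lemma mtr_scal_l k A B : mtr (mmul (mscal k A) B) = k * mtr (mmul A B).
Proof. cbv [mtr mmul mscal sum3]; ring. Qed.

Lemma dX_form Cm Q k D P : mmul Cm (mscal (-1) (mmul (mmul Q (mscal k (mmul D P))) Q)) =
  mscal (- k) (mmul (mmul (mmul Cm Q) D) (mmul P Q)).
Proof. fext; cbv [mmul mscal sum3]; ring. Qed.

Lemma sym_ABA A B : symmetric A -> symmetric B -> symmetric (mmul (mmul A B) A).
Proof. intros H1 H2. destruct (sym_inst A H1) as [a1 [a2 a3]]. destruct (sym_inst B H2) as [b1 [b2 b3]].
  ent; try reflexivity; cbv [mmul sum3]; rewrite ?a1, ?a2, ?a3, ?b1, ?b2, ?b3; ring. Qed.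
Lemma sym_dev M : symmetric M -> symmetric (dev3 M).
Proof. intros H1 i j Hi Hj. cbv [dev3 msub mscal]. rewrite H1 by auto.
  idx3 i; idx3 j; reflexivity. Qed.
Lemma mtr_dev2 M : mtr (mmul (dev3 M) (dev3 M)) = mtr (mmul M M) - mtr M * mtr M / 3.
Proof. cbv [mtr mmul dev3 msub mscal idm sum3]; simpl; field. Qed.
Lemma mtr_sq_sim Ui S U : mtr (mmul (mmul (mmul Ui S) U) (mmul (mmul Ui S) U)) =
  mtr (mmul (mmul S (mmul U Ui)) (mmul S (mmul U Ui))).
Proof. cbv [mtr mmul sum3]; ring. Qed.
Lemma mtr_sim Ui S U : mtr (mmul (mmul Ui S) U) = mtr (mmul S (mmul U Ui)).
Proof. cbv [mtr mmul sum3]; ring. Qed.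

Lemma frob_lin e1 e2 e3 A B Cc M :
  e1 * frob A M + e2 * frob B M + e3 * frob Cc M = frob (madd (madd (mscal e1 A) (mscal e2 B)) (mscal e3 Cc)) M.
Proof. cbv [frob mtr mmul trn madd mscal sum3]; ring. Qed.

Lemma symC F : symmetric (mmul (trn F) F).
Proof. intros i j _ _. cbv [mmul trn sum3]. ring. Qed.

Lemma phi_sq G Cm P : 0 < phiT G Cm P ->
  mtr (mmul (dev3 (SigmaT G Cm P)) (dev3 (SigmaT G Cm P))) = phiT G Cm P * phiT G Cm P.
Proof. unfold phiT. intro H. destruct (Rle_dec 0 (mtr (mmul (dev3 (SigmaT G Cm P)) (dev3 (SigmaT G Cm P))))) as [h|h].
  - rewrite sqrt_sqrt; auto.
  - rewrite sqrt_neg_0 in H; lra. Qed.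

Theorem mainTheorem13
  (Psi : R -> R -> R -> R) (G : Mat -> Mat)
  (F : Mat) (a b : R) (Cp dCp : R -> Mat) (lam : R -> R) :
  C1_pos Psi ->
  is_gradW Psi G ->
  0 < det F ->
  a < b ->
  (forall t, a < t < b -> PSym (Cp t)) ->
  (forall t, a < t < b -> mderiv_at Cp t (dCp t)) ->
  (forall t, a < t < b -> 0 <= lam t) ->
  (forall t, a < t < b -> 0 < phiT G (mmul (trn F) F) (Cp t)) ->
  (forall t, a < t < b ->
     meq (dCp t)
         (mscal (lam t / phiT G (mmul (trn F) F) (Cp t))
                (mmul (dev3 (SigmaT G (mmul (trn F) F) (Cp t))) (Cp t)))) ->
  (forall t, a < t < b -> symmetric (dCp t)) /\
  (forall t s, a < t < b -> a < s < b -> det (Cp t) = det (Cp s)) /\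
  (forall t, a < t < b ->
     derivable_pt_lim (fun u => Wt Psi (mmul (mmul (trn F) F) (minv (Cp u)))) t
       (- (lam t / 2) * phiT G (mmul (trn F) F) (Cp t)) /\
     (forall U, PSym U -> meq (mmul U U) (Cp t) ->
        phiT G (mmul (trn F) F) (Cp t) =
        mnorm (dev3 (mmul (mmul (minv U) (SigmaT G (mmul (trn F) F) (Cp t))) U))) /\
     - (lam t / 2) * phiT G (mmul (trn F) F) (Cp t) <= 0).
Proof.
  intros [d1 [d2 [d3 HC]]] HG HF Hab HP HdP Hlam Hphi Hflow.
  assert (HC' : C1data Psi d1 d2 d3) by exact HC. clear HC.
  set (Cm := mmul (trn F) F) in *.
  assert (SC : symmetric Cm) by apply symC.
  assert (Com : forall t, a < t < b ->
     0 < det (Cp t) /\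
     symmetric (mmul Cm (G (mmul Cm (minv (Cp t))))) /\
     meq (mmul (mscal 2 (mmul (mmul Cm (G (mmul Cm (minv (Cp t))))) (minv (Cp t)))) (Cp t))
         (mscal 2 (mmul Cm (G (mmul Cm (minv (Cp t)))))) /\
     meq (mmul (dev3 (SigmaT G Cm (Cp t))) (Cp t))
         (msub (mscal 2 (mmul Cm (G (mmul Cm (minv (Cp t)))))) (mscal (mtr (SigmaT G Cm (Cp t)) / 3) (Cp t)))).
  { intros t Ht. pose proof (HP t Ht) as HPt. pose proof (pd_det _ HPt) as Hd.
    pose proof (posX F (Cp t) HF HPt) as Hp.
    split; [auto|]. split.
    { apply (sym_CG Psi d1 d2 d3); auto. apply HPt. }
    assert (HSP := SP_eq (mmul Cm (G (mmul Cm (minv (Cp t))))) (Cp t) ltac:(lra)).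
    split; auto.
    eapply meq_trans. apply devP. apply msub_meq; [exact HSP | apply meq_refl]. }
  split; [|split].
  -
    intros t Ht. destruct (Com t Ht) as [Hd [SY [HSP HDP]]].
    eapply sym_meq. apply Hflow; auto. apply sym_scal. eapply sym_meq. exact HDP.
    apply sym_sub_scal; auto. apply HP; auto.
  -
    assert (Hder : forall u, a < u < b -> derivable_pt_lim (fun s => det (Cp s)) u 0).
    { intros u Hu. eapply D_eq. apply ddet. apply HdP; auto.
      rewrite (frob_meq _ _ _ _ (meq_refl _) (Hflow u Hu)). rewrite frob_scal, frob_cof_MP, mtr_dev. ring. }
    assert (Hc : forall t s, a < t < b -> a < s < b -> t < s -> det (Cp t) = det (Cp s)).
    { intros t s Ht Hs Hts. destruct (MVT_cor2 (fun s => det (Cp s)) (fun _ => 0) t s Hts) as [c [E _]].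
      { intros c Hc. apply Hder. lra. }
      simpl in E. lra. }
    intros t s Ht Hs. destruct (Rtotal_order t s) as [h|[h|h]].
    + auto.
    + subst; auto.
    + symmetry; auto.
  - intros t Ht. destruct (Com t Ht) as [Hd [SY [HSP HDP]]].
    pose proof (HP t Ht) as HPt. pose proof (Hphi t Ht) as Hph. pose proof (Hlam t Ht) as Hl.
    pose proof (phi_sq G Cm (Cp t) Hph) as Hsq.
    split; [|split]; [| |nra].
    +
      set (P := Cp t) in *. set (Q := minv P).
      set (X := mmul Cm Q).
      assert (Hp : pos3 (mtr X) (mtr (cof X)) (det X)) by (apply posX; auto).
      set (dX := mmul Cm (mscal (-1) (mmul (mmul Q (dCp t)) Q))).
      assert (HX : mderiv_at (fun u => mmul Cm (minv (Cp u))) t dX).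
      { apply dmulc. apply dminv. apply HdP; auto. change (det P <> 0); lra. }
      pose proof (chain3 Psi d1 d2 d3 (fun u => mtr (mmul Cm (minv (Cp u)))) (fun u => mtr (cof (mmul Cm (minv (Cp u)))))
         (fun u => det (mmul Cm (minv (Cp u)))) t _ _ _ HC' Hp
         (dtr _ _ t HX) (dtc _ _ t HX) (ddet _ _ t HX)) as Hch.
      eapply D_eq. exact Hch. fold P Q X.
      rewrite frob_lin. fold (Gf d1 d2 d3 X).
      rewrite (frob_meq _ (G X) _ _ (meq_sym _ _ (G_formula Psi d1 d2 d3 G X HC' HG Hp)) (meq_refl _)).
      set (k := lam t / phiT G Cm P) in *.
      set (D := dev3 (SigmaT G Cm P)) in *.
      assert (EdX : meq dX (mscal (- k) (mmul (mmul Cm Q) D))).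
      { unfold dX. eapply meq_trans.
        - apply mmul_meq. apply meq_refl. apply mscal_meq. apply mmul_meq. apply mmul_meq. apply meq_refl.
          apply Hflow; auto. apply meq_refl.
        - fold k D. rewrite dX_form. apply mscal_meq. eapply meq_trans.
          apply mmul_meq. apply meq_refl. apply minv_r. change (det P <> 0); lra. apply mmul_idm_r. }
      rewrite (frob_meq _ _ _ _ (meq_refl _) EdX). rewrite frob_scal, frob_move.
      rewrite (frob_meq _ (mmul Cm (G X)) _ _ (mmul_meq _ _ _ _ (sym_trn _ SC) (meq_refl _)) (meq_refl _)).
      rewrite frob_sym by exact SY. rewrite <- mmul_assoc.
      assert (E : mtr (mmul (mmul (mmul Cm (G X)) Q) D) = phiT G Cm P * phiT G Cm P / 2).
      { pose proof (mtr_sig_dev (SigmaT G Cm P)) as E1. fold D in E1.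
        unfold SigmaT in E1. rewrite mtr_scal_l in E1. fold Q X in E1. lra. }
      rewrite E. unfold k. field. lra.
    +
      intros U HU HUU. pose proof (pd_det U HU) as HdU.
      assert (HUi : meq (mmul U (minv U)) idm) by (apply minv_r; lra).
      set (S := SigmaT G Cm (Cp t)) in *.
      set (M := mmul (mmul (minv U) S) U).
      assert (SM : symmetric M).
      { apply sym_meq with (mmul (mmul (minv U) (mmul S (Cp t))) (minv U)).
        - unfold M. eapply meq_trans.
          + apply mmul_meq. apply meq_refl.
            apply meq_trans with (mmul (mmul U U) (minv U)).
            * rewrite mmul_assoc. apply meq_sym. eapply meq_trans. apply mmul_meq. apply meq_refl. exact HUi.
              apply mmul_idm_r.
            * apply mmul_meq. exact HUU. apply meq_refl.
          + rewrite !mmul_assoc. apply meq_refl.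
        - eapply sym_meq. apply mmul_meq. apply mmul_meq. apply meq_refl. exact HSP. apply meq_refl.
          apply sym_ABA. apply minv_sym. apply HU. apply sym_scal. exact SY. }
      unfold mnorm. rewrite frob_sym by (apply sym_dev; exact SM).
      rewrite mtr_dev2. unfold M. rewrite (mtr_sq_sim (minv U) S U), (mtr_sim (minv U) S U).
      assert (E1 : meq (mmul S (mmul U (minv U))) S).
      { eapply meq_trans. apply mmul_meq. apply meq_refl. exact HUi. apply mmul_idm_r. }
      rewrite (mtr_meq _ _ E1), (mtr_meq _ _ (mmul_meq _ _ _ _ E1 E1)).
      unfold phiT. fold S. rewrite mtr_dev2. reflexivity.
Qed.
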